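(* Let $\mathcal G$ be a core network with input nodes $\iota_1,\dots,\iota_n$ and output node $o$, and let $\rho_k>\rho_{k+1}$ be two adjacent absolutely super-simple nodes. Then: (a) $\rho_k$ and $\rho_{k+1}$ are adjacent $\iota_m$-super-simple nodes, for every $m=1,\dots,n$; (b) for every $m=1,\dots,n$, every $\iota_m$-simple node in $\mathcal L_m(\rho_k,\rho_{k+1})$ is an absolutely simple node; (c) $\mathcal L_m(\rho_k,\rho_{k+1})=\mathcal L(\rho_k,\rho_{k+1})$ for every $m=1,\dots,n$.
   Context: Node $b$ is downstream from $a$ if there is a directed path from $a$ to $b$. A core network: every node is upstream from $o$ and downstream from at least one input node. A simple path visits each node at most once; an $\iota_mo$-simple path is a simple path from $\iota_m$ to $o$. A node is $\iota_m$-simple if it lies on an $\iota_mo$-simple path; absolutely simple if $\iota_m$-simple for every $m$. An $\iota_m$-super-simple node is an $\iota_m$-simple node lying on every $\iota_mo$-simple path; the $\iota_m$-super-simple nodes appear in the same order on every $\iota_mo$-simple path, and two of them are adjacent $\iota_m$-super-simple nodes if they are consecutive in this order. A node is absolutely super-simple if it lies on every $\iota_mo$-simple path for every $m$; these are totally ordered $\rho_1>\cdots>\rho_p>o$, where $a>b$ means $b$ comes after $a$ on every $\iota_mo$-simple path for every $m$, and $\rho_k,\rho_{k+1}$ are adjacent if consecutive in this order. For adjacent $\iota_m$-super-simple nodes $\rho_k>\rho_{k+1}$, an $\iota_m$-simple node $\rho$ is between them if some $\iota_mo$-simple path visits $\rho_k,\rho,\rho_{k+1}$ in that order; $\mathcal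 L_m(\rho_k,\rho_{k+1})$ is the subnetwork of $\iota_m$-simple nodes between $\rho_k$ and $\rho_{k+1}$, with the arrows of $\mathcal G_m$ (the subnetwork of nodes downstream from $\iota_m$ and upstream from $o$) connecting them. For adjacent absolutely super-simple nodes, an absolutely simple node $\rho$ is between them if for some $m$ some $\iota_mo$-simple path visits $\rho_k,\rho,\rho_{k+1}$ in that order; $\mathcal L(\rho_k,\rho_{k+1})$ is the subnetwork of absolutely simple nodes between them, with arrows of $\mathcal G$ connecting them. *)

(* Defs.v *)
From mathcomp Require Import all_boot.
Set Implicit Arguments. Unset Strict Implicit. Unset Printing Implicit Defensive.

Section Network.
Variables (T : finType) (e : rel T) (n : nat) (iota : 'I_n -> T) (o : T).

(* x is upstream from y / y downstream from x: directed path x -> y *)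
Definition downstream (x y : T) : bool := connect e x y.

Definition core_network : Prop :=
  forall x, downstream x o /\ exists m, downstream (iota m) x.

(* A simple path from a to b, with vertex list a :: s. *)
Definition simple_path (a b : T) (s : seq T) : bool :=
  [&& path e a s, last a s == b & uniq (a :: s)].

Definition io_path (m : 'I_n) (s : seq T) : bool := simple_path (iota m) o s.

Definition m_simple (m : 'I_n) (x : T) : Prop :=
  exists s, io_path m s /\ x \in iota m :: s.

Definition abs_simple (x : T) : Prop := forall m, m_simple m x.

Definition m_super_simple (m : 'I_n) (x : T) : Prop :=
  m_simple m x /\ forall s, io_path m s -> x \in iota m :: s.

Definition abs_super_simple (x : T) : Prop :=
  forall m s, io_path m s -> x \in iota m :: s.

Definition m_before (m : 'I_n) (a b : T) : Prop :=
  forall s, io_path m s ->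
    [/\ a \in iota m :: s, b \in iota m :: s &
        index a (iota m :: s) < index b (iota m :: s)].

(* a > b : b comes after a on every iota_m o-simple path, for every m *)
Definition abs_before (a b : T) : Prop := forall m, m_before m a b.

Definition m_adjacent (m : 'I_n) (a b : T) : Prop :=
  [/\ m_super_simple m a, m_super_simple m b, m_before m a b &
      ~ exists c, [/\ m_super_simple m c, m_before m a c & m_before m c b]].

Definition abs_adjacent (a b : T) : Prop :=
  [/\ abs_super_simple a, abs_super_simple b, abs_before a b &
      ~ exists c, [/\ abs_super_simple c, abs_before a c & abs_before c b]].

Definition visits_between (m : 'I_n) (a x b : T) : Prop :=
  exists s, [/\ io_path m s, a \in iota m :: s, x \in iota m :: s,
    b \in iota m :: s &
    index a (iota m :: s) <= index x (iota m :: s) <= index b (iota m :: s)].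

Definition m_between (m : 'I_n) (a b x : T) : Prop :=
  m_simple m x /\ visits_between m a x b.

Definition abs_between (a b x : T) : Prop :=
  abs_simple x /\ exists m, visits_between m a x b.

Definition Gm_node (m : 'I_n) (x : T) : bool :=
  downstream (iota m) x && downstream x o.

Definition Lm_node (m : 'I_n) (a b x : T) : Prop := m_between m a b x.
Definition Lm_arrow (m : 'I_n) (a b x y : T) : Prop :=
  [/\ m_between m a b x, m_between m a b y, Gm_node m x, Gm_node m y & e x y].

Definition L_node (a b x : T) : Prop := abs_between a b x.
Definition L_arrow (a b x y : T) : Prop :=
  [/\ abs_between a b x, abs_between a b y & e x y].

End Network.

(* Main.v *)
Require Import Defs.
From mathcomp Require Import all_boot.
Set Implicit Arguments. Unset Strict Implicit. Unset Printing Implicit Defensive.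

Lemma take_last_nth (T : Type) (d x : T) s k : k <= size s ->
  last x (take k s) = nth d (x :: s) k.
Proof.
move=> hk; rewrite (last_nth d) size_takel //.
have -> : x :: take k s = take k.+1 (x :: s) by [].
by rewrite nth_take.
Qed.

Lemma mem_pre (T : eqType) (x y : T) s k : k <= size s ->
  (y \in x :: take k s) = (index y (x :: s) <= k).
Proof.
move=> hk; have -> : x :: take k s = take k.+1 (x :: s) by [].
by rewrite in_take_leq.
Qed.

Lemma decomp (T : eqType) (e : rel T) x z s u v :
  path e x s -> last x s = z -> uniq (x :: s) -> u \in x :: s -> v \in x :: s ->
  index u (x :: s) < index v (x :: s) ->
  exists s1 mid s3, [/\ s = s1 ++ mid ++ s3, [/\ path e x s1, last x s1 = u,
     path e u mid & last u mid = v], path e v s3, last v s3 = z &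
     [/\ forall y, (y \in x :: s1) = (index y (x :: s) <= index u (x :: s)),
         forall y, y \in mid -> index u (x :: s) < index y (x :: s) <= index v (x :: s) &
         forall y, y \in s3 -> index v (x :: s) < index y (x :: s)]].
Proof.
move=> Hp Hl Hu Hmu Hmv Hlt.
set ku := index u (x :: s) in Hlt *; set kv := index v (x :: s) in Hlt *.
have hku : ku <= size s by rewrite -ltnS -[(size s).+1]/(size (x :: s)) index_mem.
have hkv : kv <= size s by rewrite -ltnS -[(size s).+1]/(size (x :: s)) index_mem.
have Etk : take kv s = take ku s ++ take (kv - ku) (drop ku s).
  by rewrite -takeD subnKC // ltnW.
have Es : s = take ku s ++ take (kv - ku) (drop ku s) ++ drop kv s.
  by rewrite catA -Etk cat_take_drop.
have Lu : last x (take ku s) = u by rewrite (take_last_nth x) // nth_index.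
have Lv : last x (take kv s) = v by rewrite (take_last_nth x) // nth_index.
exists (take ku s), (take (kv - ku) (drop ku s)), (drop kv s).
have Hp' := Hp; rewrite Es catA !cat_path -Etk Lv in Hp'.
move: Hp' => /andP [/andP [P1 P2] P3]; rewrite Lu in P2.
have Hu' := Hu; rewrite Es -cat_cons cat_uniq in Hu'.
move: Hu' => /and3P [_ Hd _].
have Hu2 := Hu; rewrite -(cat_take_drop kv s) -cat_cons cat_uniq in Hu2.
move: Hu2 => /and3P [_ Hd2 _].
split => //.
- split => //. by rewrite Etk last_cat Lu in Lv.
- by rewrite -Hl -{2}(cat_take_drop kv s) last_cat Lv.
split.
- by move=> y; rewrite mem_pre.
- move=> y Hy; apply/andP; split.
    have : y \notin x :: take ku s.
      by move/hasPn: Hd => Hd; apply: Hd; rewrite mem_cat Hy.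
    by rewrite mem_pre // -ltnNge.
  by rewrite -mem_pre // Etk -cat_cons mem_cat Hy orbT.
- move=> y Hy.
  have : y \notin x :: take kv s by move/hasPn: Hd2 => Hd2; apply: Hd2.
  by rewrite mem_pre // -ltnNge.
Qed.

Lemma walk_path (T : eqType) (e : rel T) x z w :
  path e x w -> last x w = z ->
  exists s, [/\ path e x s, last x s = z, uniq (x :: s) & {subset s <= w}].
Proof.
move=> Hp <-; case: (shortenP Hp) => s' Hp' Hu Hs.
by exists s'.
Qed.

Lemma index_last_uniq (T : eqType) (x : T) s : uniq (x :: s) ->
  index (last x s) (x :: s) = size s.
Proof. by move=> Hu; rewrite (last_nth x) index_uniq. Qed.
Lemma io_pathP (T : finType) (e : rel T) n (iota : 'I_n -> T) o m s :
  io_path e iota o m s <-> [/\ path e (iota m) s, last (iota m) s = o & uniq (iota m :: s)].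
Proof.
rewrite /io_path /simple_path; split.
  by case/and3P => -> /eqP -> ->.
by case=> -> -> ->; rewrite eqxx.
Qed.

Lemma ex_io (T : finType) (e : rel T) n (iota : 'I_n -> T) o :
  core_network e iota o -> forall m, exists s, io_path e iota o m s.
Proof.
move=> Hc m; have [H _] := Hc (iota m).
case/connectP: H => p Hp Hl.
have [s [Hp' Hl' Hu _]] := walk_path Hp (esym Hl).
by exists s; apply/io_pathP.
Qed.

Lemma no_walk (T : finType) (e : rel T) n (iota : 'I_n -> T) o c i
  (Hc : forall s, io_path e iota o i s -> c \in iota i :: s) w1 y1 w2 y2 w3 :
  path e (iota i) w1 -> last (iota i) w1 = y1 -> path e y1 w2 -> last y1 w2 = y2 ->
  path e y2 w3 -> last y2 w3 = o ->
  c \notin iota i :: w1 -> c \notin w2 -> c \notin w3 -> False.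
Proof.
move=> P1 L1 P2 L2 P3 L3 N1 N2 N3.
have Hp : path e (iota i) (w1 ++ w2 ++ w3) by rewrite !cat_path L1 P1 P2 L2 P3.
have Hl : last (iota i) (w1 ++ w2 ++ w3) = o by rewrite !last_cat L1 L2 L3.
have [s [Hp' Hl' Hu Hsub]] := walk_path Hp Hl.
have := Hc s (proj2 (io_pathP _ _ _ _ _) (And3 Hp' Hl' Hu)).
rewrite inE => /orP [/eqP Hci | Hcs].
  by move: N1; rewrite inE Hci eqxx.
move: (Hsub c Hcs); rewrite !mem_cat => /or3P [H|H|H].
- by move: N1; rewrite inE H orbT.
- by rewrite H in N2.
- by rewrite H in N3.
Qed.
Lemma splice (T : finType) (e : rel T) n (iota : 'I_n -> T) o a b
  (Hasa : abs_super_simple e iota o a) (Hasb : abs_super_simple e iota o b)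
  (Hbef : abs_before e iota o a b)
  (Hex : forall m, exists s, io_path e iota o m s) i1 i2 x :
  visits_between e iota o i2 a x b -> visits_between e iota o i1 a x b.
Proof.
case=> sQ [HQ aQ xQ bQ /andP [Hax Hxb]].
have [sP HP] := Hex i1.
have [_ _ ltP] := Hbef i1 sP HP.
have [_ _ ltQ] := Hbef i2 sQ HQ.
have aP := Hasa i1 sP HP. have bP := Hasb i1 sP HP.
move: (HP) (HQ) => /io_pathP [PP LP UP] /io_pathP [PQ LQ UQ].
have [p1 [pm [p3 [EP [P1 L1 Pm Lm] P3 L3 [M1 Mm M3]]]]] := decomp PP LP UP aP bP ltP.
have [q1 [qm [q3 [EQ [Q1 K1 Qm Km] Q3 K3 [N1 Nm N3]]]]] := decomp PQ LQ UQ aQ bQ ltQ.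
have Hi : forall u, u \in qm -> u \notin iota i1 :: p1.
  move=> u Hu; apply/negP => Hu1.
  have /andP [ua ub] := Nm u Hu.
  have uaP : index u (iota i1 :: sP) <= index a (iota i1 :: sP) by rewrite -M1.
  have uP : u \in iota i1 :: sP by rewrite EP -cat_cons mem_cat Hu1.
  have uQ : u \in iota i2 :: sQ by rewrite EQ -cat_cons !mem_cat Hu orbT.
  have uaP' : index u (iota i1 :: sP) < index a (iota i1 :: sP).
    rewrite ltn_neqAle uaP andbT; apply/negP => /eqP Heq.
    have Eu := index_inj a uP aP Heq.
    by rewrite Eu ltnn in ua.
  have ubQ : index u (iota i2 :: sQ) < index b (iota i2 :: sQ).
    rewrite ltn_neqAle ub andbT; apply/negP => /eqP Heq.
    have Eu := index_inj a uQ bQ Heq.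
    by rewrite Eu leqNgt ltP in uaP.
  have [r1 [rm [r3 [_ [R1 RL1 _ _] _ _ [RM1 _ _]]]]] := decomp PP LP UP uP aP uaP'.
  have [t1 [tm [t3 [_ [_ _ Tm TLm] _ _ [_ TMm _]]]]] := decomp PQ LQ UQ uQ bQ ubQ.
  apply: (no_walk (Hasa i1) R1 RL1 Tm TLm P3 L3).
  - by rewrite RM1 -ltnNge.
  - apply/negP => H; have /andP [H1 _] := TMm a H.
    by have := ltn_trans ua H1; rewrite ltnn.
  - by apply/negP => H; have := M3 a H; rewrite ltnNge (ltnW ltP).
have Hii : forall u, u \in qm -> u \notin p3.
  move=> u Hu; apply/negP => Hu3.
  have /andP [ua ub] := Nm u Hu.
  have buP := M3 u Hu3.
  have uP : u \in iota i1 :: sP by rewrite EP -cat_cons !mem_cat Hu3 !orbT.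
  have uQ : u \in iota i2 :: sQ by rewrite EQ -cat_cons !mem_cat Hu orbT.
  have ubQ : index u (iota i2 :: sQ) < index b (iota i2 :: sQ).
    rewrite ltn_neqAle ub andbT; apply/negP => /eqP Heq.
    have Eu := index_inj a uQ bQ Heq.
    by rewrite Eu ltnn in buP.
  have [_ [tm [_ [_ [_ _ Tm TLm] _ _ [_ TMm _]]]]] := decomp PQ LQ UQ aQ uQ ua.
  have [_ [_ [r3 [_ _ R3 RL3 [_ _ RM3]]]]] := decomp PP LP UP bP uP buP.
  apply: (no_walk (Hasb i1) P1 L1 Tm TLm R3 RL3).
  - by rewrite M1 -ltnNge.
  - apply/negP => H; have /andP [_ H1] := TMm b H.
    by rewrite leqNgt ubQ in H1.
  - by apply/negP => H; have := RM3 b H; move/(ltn_trans buP); rewrite ltnn.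
move: (UP); rewrite EP -cat_cons cat_uniq => /and3P [U1 D1 U23].
move: U23; rewrite cat_uniq => /and3P [_ _ U3].
move: (UQ); rewrite EQ -cat_cons cat_uniq => /and3P [_ _].
rewrite cat_uniq => /and3P [Uqm _ _].
have [bqm HbQ] : b \in qm /\ forall y, y \in qm -> index y qm <= index b qm.
  move: Km Uqm; case: (qm) => [|q0 qr] Km Uqm.
    by rewrite /= in Km; rewrite Km ltnn in ltQ.
  rewrite -Km; split; first exact: (mem_last q0 qr).
  move=> y Hy; change (last a (q0 :: qr)) with (last q0 qr); rewrite (index_last_uniq Uqm) -ltnS.
  by rewrite -[(size qr).+1]/(size (q0 :: qr)) index_mem.
have memN : forall y, y \in qm -> y \in iota i1 :: (p1 ++ qm ++ p3).
  by move=> y Hy; rewrite -cat_cons mem_cat mem_cat Hy orbT.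
have aN : a \in iota i1 :: (p1 ++ qm ++ p3).
  by rewrite -cat_cons mem_cat -L1 mem_last.
have IA : index a (iota i1 :: (p1 ++ qm ++ p3)) = size p1.
  by rewrite -cat_cons index_cat -L1 mem_last; exact: index_last_uniq.
have IQ : forall y, y \in qm ->
    index y (iota i1 :: (p1 ++ qm ++ p3)) = (size p1).+1 + index y qm.
  by move=> y Hy; rewrite -cat_cons index_cat (negbTE (Hi y Hy)) index_cat Hy.
exists (p1 ++ qm ++ p3); split.
- apply/io_pathP; split.
  + by rewrite !cat_path L1 Km P1 Qm P3.
  + by rewrite !last_cat L1 Km.
  + rewrite -cat_cons cat_uniq U1 /=; apply/andP; split.
      apply/hasPn => y; rewrite mem_cat => /orP [Hy|Hy]; first exact: Hi.
      by move/hasPn: D1 => D1; apply: D1; rewrite mem_cat Hy orbT.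
    rewrite cat_uniq Uqm U3 andbT.
    by apply/hasPn => y Hy; apply/negP => Hyq; move: (Hii y Hyq); rewrite Hy.
- exact: aN.
- case: (eqVneq x a) => [->|xna]; first exact: aN.
  rewrite EQ -cat_cons !mem_cat in xQ; case/or3P: xQ => Hx.
  + have Hle := Hx; rewrite N1 in Hle.
    have Heq : index x (iota i2 :: sQ) = index a (iota i2 :: sQ).
      by apply/eqP; rewrite eqn_leq Hle Hax.
    have xQ' : x \in iota i2 :: sQ by rewrite EQ -cat_cons mem_cat Hx.
    by rewrite (index_inj a xQ' aQ Heq) eqxx in xna.
  + exact: memN.
  + by have := N3 x Hx; rewrite ltnNge Hxb.
- exact: memN.
- rewrite (IQ b bqm) IA.
  case: (eqVneq x a) => [->|xna]; first by rewrite IA leqnn /= -addn1 -addnA leq_addr.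
  have xqm : x \in qm.
    move: xQ; rewrite EQ -cat_cons !mem_cat; case/or3P => Hx //.
    + have Hle := Hx; rewrite N1 in Hle.
      have Heq : index x (iota i2 :: sQ) = index a (iota i2 :: sQ).
        by apply/eqP; rewrite eqn_leq Hle Hax.
      have xQ' : x \in iota i2 :: sQ by rewrite EQ -cat_cons mem_cat Hx.
      by rewrite (index_inj a xQ' aQ Heq) eqxx in xna.
    + by have := N3 x Hx; rewrite ltnNge Hxb.
  rewrite (IQ x xqm) ltnW /=; last by rewrite ltnS leq_addr.
  by rewrite ltnS leq_add2l HbQ.
Qed.
Lemma gm_node (T : finType) (e : rel T) n (iota : 'I_n -> T) o m x :
  m_simple e iota o m x -> Gm_node e iota o m x.
Proof.
case=> s [/io_pathP [Hp Hl Hu] Hx].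
rewrite /Gm_node /downstream; apply/andP; split; first exact: (path_connect Hp).
set k := index x (iota m :: s).
have hk : k <= size s by rewrite -ltnS -[(size s).+1]/(size (iota m :: s)) index_mem.
have Lk : last (iota m) (take k s) = x by rewrite (take_last_nth x) // nth_index.
apply/connectP; exists (drop k s).
  by move: Hp; rewrite -{1}(cat_take_drop k s) cat_path Lk => /andP [_ ->].
by rewrite -Hl -{1}(cat_take_drop k s) last_cat Lk.
Qed.

Theorem lemma3p21 (T : finType) (e : rel T) (n : nat) (iota : 'I_n -> T) (o : T)
  (Hinj : injective iota) (Ho : forall m, iota m != o)
  (Hcore : core_network e iota o)
  (a b : T) (Hab : abs_adjacent e iota o a b) :
  (forall m, m_adjacent e iota o m a b) /\
  (forall m x, m_simple e iota o m x -> Lm_node e iota o m a b x ->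
     abs_simple e iota o x) /\
  (forall m, (forall x, Lm_node e iota o m a b x <-> L_node e iota o a b x) /\
             (forall x y, Lm_arrow e iota o m a b x y <-> L_arrow e iota o a b x y)).
Proof.
have Hex := ex_io Hcore.
case: (Hab) => Hasa Hasb Hbef Hno.
have Hspl := splice Hasa Hasb Hbef Hex.
have Hb : forall m x, visits_between e iota o m a x b -> abs_simple e iota o x.
  move=> m x Hv j; have [s [Hs _ Hx _ _]] := Hspl j m x Hv; by exists s.
split.
- move=> m; split.
  + split; last exact: Hasa m.
    by have [s Hs] := Hex m; exists s; split => //; exact: Hasa m s Hs.
  + split; last exact: Hasb m.
    by have [s Hs] := Hex m; exists s; split => //; exact: Hasb m s Hs.
  + exact: Hbef m.
  + case=> c [[_ Hc] Hac Hcb]; apply: Hno; exists c.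
    have key : forall j s, io_path e iota o j s ->
        [/\ c \in iota j :: s, index a (iota j :: s) < index c (iota j :: s)
          & index c (iota j :: s) < index b (iota j :: s)].
      move=> j sP HP.
      have [sQ HQ] := Hex m.
      have [_ cQ acQ] := Hac sQ HQ. have [_ _ cbQ] := Hcb sQ HQ.
      have [aP bP ltP] := Hbef j sP HP. have [aQ bQ ltQ] := Hbef m sQ HQ.
      move: (HP) (HQ) => /io_pathP [PP LP UP] /io_pathP [PQ LQ UQ].
      have [p1 [pm [p3 [EP [P1 L1 Pm Lm] P3 L3 [M1 Mm M3]]]]] := decomp PP LP UP aP bP ltP.
      have [q1 [qm [q3 [EQ [Q1 K1 Qm Km] Q3 K3 [N1 Nm N3]]]]] := decomp PQ LQ UQ aQ bQ ltQ.
      case Hcp: (c \in pm).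
        have /andP [h1 h2] := Mm c Hcp.
        have cP : c \in iota j :: sP by rewrite EP -cat_cons !mem_cat Hcp orbT.
        split => //; rewrite ltn_neqAle h2 andbT; apply/negP => /eqP Heq.
        have Ecb := index_inj a cP bP Heq.
        by rewrite Ecb ltnn in cbQ.
      exfalso; apply: (no_walk Hc Q1 K1 Pm Lm Q3 K3).
      * by rewrite N1 -ltnNge.
      * by rewrite Hcp.
      * by apply/negP => H; have := N3 c H; rewrite ltnNge (ltnW cbQ).
    split.
    * by move=> j s Hs; case: (key j s Hs).
    * move=> j s Hs; have [? ? ?] := key j s Hs; split => //; exact: Hasa j s Hs.
    * move=> j s Hs; have [? ? ?] := key j s Hs; split => //; exact: Hasb j s Hs.
- split.
  + move=> m x _ [_ Hv]; exact: Hb m x Hv.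
  + move=> m.
    have Hnode : forall x, Lm_node e iota o m a b x <-> L_node e iota o a b x.
      move=> x; split.
        by case=> _ Hv; split; [exact: Hb m x Hv | exists m].
      by case=> Hs [j Hv]; split; [exact: Hs m | exact: Hspl m j x Hv].
    split => //.
    move=> x y; split.
      case=> Hx Hy _ _ Hxy; split => //; [exact: (proj1 (Hnode x) Hx) | exact: (proj1 (Hnode y) Hy)].
    case=> Hx Hy Hxy.
    have Hx' := proj2 (Hnode x) Hx. have Hy' := proj2 (Hnode y) Hy.
    by split => //; apply: gm_node; [exact: (proj1 Hx') | exact: (proj1 Hy')].
Qed.
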